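(* Let $\mathcal{A}$ be the Bose--Mesner algebra of a symmetric association scheme with adjacency matrices $A_0=I,A_1,\dots,A_d$ of size $n$ and first eigenmatrix $P=(P_{i,j})_{0\leq i,j\leq d}$. For indeterminates $X_{i,j}$ ($0\leq i<j\leq d$) define \[ e_k=\sum_{0\leq i<j\leq d}P_{k,i}P_{k,j}X_{i,j}+\sum_{i=0}^dP_{k,i}^2-n\qquad(k=1,\dots,d). \] Let $w_0,\dots,w_d$ be nonzero complex numbers and $a_{i,j}$ ($0\leq i,j\leq d$, $i\neq j$) complex numbers with $\frac{w_j}{w_i}+\frac{w_i}{w_j}=a_{i,j}$ for all $i\neq j$. Let $W=\sum_{j=0}^dw_jA_j$. Then the following are equivalent: (i) $W$ is a type-II matrix; (ii) $(a_{i,j})_{0\leq i<j\leq d}$ is a common zero of $e_1,\dots,e_d$. Moreover, if one of these holds, $a_{i,j}\in\mathbb{R}$ for all $0\leq i<j\leq d$, and $-2<a_{i_0,i_1}<2$ for some $0\leq i_0<i_1\leq d$, then $W$ is a scalar multiple of a complex Hadamard matrix.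
   Context: A symmetric association scheme with adjacency matrices $A_0=I,A_1,\dots,A_d$ means: the $A_i$ are symmetric $n\times n$ $(0,1)$-matrices summing to the all-ones matrix $J$, and their span $\mathcal{A}$ (the Bose--Mesner algebra) is closed under multiplication; $\mathcal{A}$ has primitive idempotents $E_0=\frac1nJ,E_1,\dots,E_d$, and the first eigenmatrix $P$ is defined by $A_j=\sum_{i}P_{i,j}E_i$. A type-II matrix is an $n\times n$ matrix $W$ with nonzero complex entries with $W(W^{(-)})^\top=nI$, $W^{(-)}$ the entrywise inverse. A complex Hadamard matrix is an $n\times n$ complex matrix $H$ with all entries of absolute value $1$ and $HH^*=nI$. *)

(* Defs.v *)
(* The complex numbers are modelled by an arbitrary
   C : numClosedFieldType (e.g. complex R for R : realType). *)
From HB Require Import structures.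
From mathcomp Require Import all_boot all_order all_algebra.
Set Implicit Arguments.
Unset Strict Implicit.
Unset Printing Implicit Defensive.
Import Order.TTheory GRing.Theory Num.Theory.
Local Open Scope ring_scope.

Section Defs.
Variable C : numClosedFieldType.

Definition in_span n d (A : 'I_d.+1 -> 'M[C]_n) (M : 'M[C]_n) : Prop :=
  exists c : 'I_d.+1 -> C, M = \sum_(i < d.+1) c i *: A i.

Definition sym_assoc_scheme n d (A : 'I_d.+1 -> 'M[C]_n) : Prop :=
  [/\ A ord0 = 1%:M,
      forall i, (A i)^T = A i,
      forall i x y, A i x y = 0 \/ A i x y = 1,
      \sum_(i < d.+1) A i = const_mx 1
    & forall i j, in_span A (A i *m A j)].

Definition prim_idempotents_eigenmatrix n d (A E : 'I_d.+1 -> 'M[C]_n)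
    (P : 'M[C]_d.+1) : Prop :=
  E ord0 = n%:R^-1 *: const_mx 1 /\
  [/\ forall i, in_span A (E i),
      forall i, E i != 0,
      forall i j, E i *m E j = if i == j then E i else 0,
      \sum_(i < d.+1) E i = 1%:M
    & forall j, A j = \sum_(i < d.+1) P i j *: E i].

(* Value of e_k at the point X_{i,j} := a i j (0 <= i < j <= d). *)
Definition e_val n d (P : 'M[C]_d.+1) (a : 'I_d.+1 -> 'I_d.+1 -> C)
    (k : 'I_d.+1) : C :=
  \sum_(i < d.+1) \sum_(j < d.+1 | (i < j)%N) P k i * P k j * a i j
  + \sum_(i < d.+1) P k i ^+ 2 - n%:R.

Definition type_II n (W : 'M[C]_n) : Prop :=
  (forall x y, W x y != 0) /\
  W *m (map_mx (fun z => z^-1) W)^T = n%:R%:M.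

Definition complex_hadamard n (H : 'M[C]_n) : Prop :=
  (forall x y, `|H x y| = 1) /\
  H *m (map_mx (fun z => z^*) H)^T = n%:R%:M.

End Defs.

(* Main.v *)
Require Import Defs.
From HB Require Import structures.
From mathcomp Require Import all_boot all_order all_algebra.
From mathcomp Require Import ring.
Import Order.TTheory GRing.Theory Num.Theory.
Local Open Scope ring_scope.

Lemma entry_sel (C : numClosedFieldType) n d (A : 'I_d.+1 -> 'M[C]_n) :
  (forall i x y, A i x y = 0 \/ A i x y = 1) -> \sum_i A i = const_mx 1 ->
  forall x y, exists j : 'I_d.+1,
    forall c : 'I_d.+1 -> C, (\sum_i c i *: A i) x y = c j.
Proof.
move=> H01 Hs x y.
have Hxy : \sum_i A i x y = 1.
  by have := congr1 (fun M : 'M[C]_n => M x y) Hs; rewrite summxE mxE.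
have [j Hj] : exists j, A j x y = 1.
  case: (boolP [exists j, A j x y == 1]) => [/existsP [j /eqP]|/existsPn Hn].
    by exists j.
  exfalso; move: Hxy; rewrite big1 => [/eqP|i _]; first by rewrite eq_sym oner_eq0.
  by case: (H01 i x y) => // h; move: (Hn i); rewrite h eqxx.
have Hz : forall i, i != j -> A i x y = 0.
  move=> i Hij; case: (H01 i x y) => // Hi; exfalso.
  move: Hxy; rewrite (bigD1 j) //= (bigD1 i) //= Hj Hi.
  set r := \sum_(_ | _) _.
  have r0 : 0 <= r.
    by apply: sumr_ge0 => k _; case: (H01 k x y) => ->; rewrite ?lexx ?ler01.
  move=> h; have h1 : 1 + r = 0 by apply: (addrI 1); rewrite addr0.
  have : r = -1 by apply/eqP; rewrite -addr_eq0 addrC h1.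
  by move=> hr; move: r0; rewrite hr oppr_ge0 ler10.
exists j => c; rewrite summxE (bigD1 j) //= big1 => [|i Hi].
  by rewrite !mxE Hj mulr1 addr0.
by rewrite !mxE Hz // mulr0.
Qed.

Lemma AA_decomp (C : numClosedFieldType) n d (A E : 'I_d.+1 -> 'M[C]_n)
  (P : 'M[C]_d.+1) :
  (forall i j, E i *m E j = if i == j then E i else 0) ->
  (forall j, A j = \sum_i P i j *: E i) ->
  forall i j, A i *m A j = \sum_k (P k i * P k j) *: E k.
Proof.
move=> HE HA i j; rewrite (HA i) (HA j) mulmx_suml; apply: eq_bigr => k _.
rewrite mulmx_sumr (bigD1 k) //= big1 => [|l Hl].
  by rewrite -scalemxAl -scalemxAr HE eqxx scalerA addr0.
by rewrite -scalemxAl -scalemxAr HE eq_sym (negbTE Hl) !scaler0.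
Qed.

Lemma sum_decomp (C : numClosedFieldType) n d (A E : 'I_d.+1 -> 'M[C]_n)
  (P : 'M[C]_d.+1) :
  (forall i j, E i *m E j = if i == j then E i else 0) ->
  (forall j, A j = \sum_i P i j *: E i) ->
  forall c : 'I_d.+1 -> 'I_d.+1 -> C,
  \sum_i \sum_j c i j *: (A i *m A j)
  = \sum_k (\sum_i \sum_j c i j * (P k i * P k j)) *: E k.
Proof.
move=> HE HA c.
under eq_bigr => i _ do under eq_bigr => j _ do
  rewrite (@AA_decomp _ _ _ _ _ _ HE HA) scaler_sumr.
under eq_bigr => i _ do rewrite exchange_big /=.
rewrite exchange_big /=; apply: eq_bigr => k _.
rewrite scaler_suml; apply: eq_bigr => i _.
rewrite scaler_suml; apply: eq_bigr => j _.
by rewrite scalerA.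
Qed.

Lemma tri_split (C : numClosedFieldType) m (f : 'I_m -> 'I_m -> C) :
  \sum_(i < m) \sum_(j < m) f i j
  = \sum_(i < m) \sum_(j < m | (i < j)%N) (f i j + f j i) + \sum_(i < m) f i i.
Proof.
have step : forall i : 'I_m, \sum_(j < m) f i j
    = \sum_(j < m | (i < j)%N) f i j + \sum_(j < m | (j < i)%N) f i j + f i i.
  move=> i; rewrite (bigD1 i) //= (bigID (fun j : 'I_m => (i < j)%N)) /=.
  have e1 : \sum_(j < m | (j != i) && (i < j)%N) f i j
      = \sum_(j < m | (i < j)%N) f i j.
    by apply: eq_bigl => j; rewrite -val_eqE /=; case: ltngtP.
  have e2 : \sum_(j < m | (j != i) && ~~ (i < j)%N) f i j
      = \sum_(j < m | (j < i)%N) f i j.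
    by apply: eq_bigl => j; rewrite -val_eqE /=; case: ltngtP.
  by rewrite e1 e2 addrC.
under eq_bigr => i _ do rewrite step.
rewrite big_split /= big_split /=; congr (_ + _).
rewrite [RHS](eq_bigr (fun i : 'I_m => \sum_(j < m | (i < j)%N) f i j
   + \sum_(j < m | (i < j)%N) f j i)); last by move=> i _; rewrite big_split.
rewrite [RHS]big_split /=; congr (_ + _).
rewrite (eq_bigr (fun i : 'I_m => \sum_(j < m) if (j < i)%N then f i j else 0)); last first.
  by move=> i _; rewrite big_mkcond.
rewrite exchange_big /=; apply: eq_bigr => i _.
by rewrite [in RHS]big_mkcond.
Qed.

Lemma lam_eq (C : numClosedFieldType) d (p w : 'I_d.+1 -> C)
  (a : 'I_d.+1 -> 'I_d.+1 -> C) :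
  (forall j, w j != 0) ->
  (forall i j, i != j -> w j / w i + w i / w j = a i j) ->
  \sum_(i < d.+1) \sum_(j < d.+1) (w i / w j) * (p i * p j)
  = \sum_(i < d.+1) \sum_(j < d.+1 | (i < j)%N) p i * p j * a i j
    + \sum_(i < d.+1) p i ^+ 2.
Proof.
move=> Hw Ha; rewrite tri_split; congr (_ + _).
  apply: eq_bigr => i _; apply: eq_bigr => j Hij.
  have Hn : i != j by rewrite -val_eqE /= ltn_eqF.
  rewrite -(Ha i j Hn); ring.
by apply: eq_bigr => i _; rewrite divff // mul1r expr2.
Qed.

Lemma part1 (C : numClosedFieldType) (n d : nat)
  (A E : 'I_d.+1 -> 'M[C]_n) (P : 'M[C]_d.+1)
  (w : 'I_d.+1 -> C) (a : 'I_d.+1 -> 'I_d.+1 -> C) :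
  sym_assoc_scheme A ->
  prim_idempotents_eigenmatrix A E P ->
  (forall j, w j != 0) ->
  (forall i j, i != j -> w j / w i + w i / w j = a i j) ->
  let W := \sum_(j < d.+1) w j *: A j in
  (type_II W <-> (forall k : 'I_d.+1, k != ord0 -> e_val n P a k = 0)).
Proof.
move=> [HA0 HAT H01 Hsum _] [HE0 [_ HEnz HEE HEsum HAE]] Hw Ha W.
pose Wi := \sum_(j < d.+1) (w j)^-1 *: A j.
have F1 : forall x y, W x y * Wi x y = 1.
  move=> x y; have [j Hj] := @entry_sel _ _ _ _ H01 Hsum x y.
  by rewrite /W /Wi !Hj divff.
have F1n : forall x y, W x y != 0.
  by move=> x y; apply/eqP => h; move: (F1 x y); rewrite h mul0r => /eqP; rewrite eq_sym oner_eq0.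
have F2 : map_mx (fun z => z^-1) W = Wi.
  apply/matrixP => x y; rewrite mxE; have [j Hj] := @entry_sel _ _ _ _ H01 Hsum x y.
  by rewrite /W /Wi !Hj.
have HAs : forall j x y, A j y x = A j x y by move=> j x y; rewrite -{2}(HAT j) mxE.
have F3 : Wi^T = Wi.
  apply/matrixP => x y; rewrite mxE /Wi !summxE; apply: eq_bigr => j _.
  by rewrite !mxE HAs.
pose lam k := \sum_(i < d.+1) \sum_(j < d.+1) (w i / w j) * (P k i * P k j).
have F4 : W *m Wi = \sum_k lam k *: E k.
  rewrite -(@sum_decomp _ _ _ _ _ _ HEE HAE) /W /Wi mulmx_suml; apply: eq_bigr => i _.
  rewrite mulmx_sumr; apply: eq_bigr => j _.
  by rewrite -scalemxAl -scalemxAr scalerA.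
have F5 : forall k, lam k = e_val n P a k + n%:R.
  by move=> k; rewrite /e_val /lam (@lam_eq _ _ _ _ _ Hw Ha) subrK.
have Fk : forall k, (\sum_l lam l *: E l) *m E k = lam k *: E k.
  move=> k; rewrite mulmx_suml (bigD1 k) //= big1 => [|l Hl].
    by rewrite -scalemxAl HEE eqxx addr0.
  by rewrite -scalemxAl HEE (negbTE Hl) scaler0.
have n0 : (n%:R : C) != 0.
  rewrite pnatr_eq0; apply/negP => /eqP nz; move: (HEnz ord0); apply/negP.
  rewrite negbK; apply/eqP/matrixP => -[x hx] y.
  by exfalso; move: hx; rewrite nz.
have Hlam : (W *m Wi = n%:R%:M) -> forall k, lam k = n%:R.
  move=> HG k; have := Fk k; rewrite -F4 HG mul_scalar_mx => /eqP.
  rewrite -subr_eq0 -scalerBl scaler_eq0 (negbTE (HEnz k)) orbF subr_eq0.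
  by move=> /eqP.
have trW : \tr (W *m Wi) = n%:R * n%:R.
  rewrite /mxtrace (eq_bigr (fun _ => n%:R)); last first.
    move=> x _; rewrite mxE (eq_bigr (fun _ => 1)); last first.
      by move=> y _; rewrite -{1}F3 mxE F1.
    by rewrite sumr_const card_ord.
  by rewrite sumr_const card_ord mulr_natr.
have trE : \sum_k \tr (E k) = n%:R.
  by rewrite -raddf_sum HEsum; apply: mxtrace1.
have trE0 : \tr (E ord0) = 1.
  rewrite HE0 mxtraceZ /mxtrace (eq_bigr (fun _ => 1)); last by move=> x _; rewrite mxE.
  by rewrite sumr_const card_ord mulVf.
have Hlam0 : (forall k, k != ord0 -> lam k = n%:R) -> lam ord0 = n%:R.
  move=> Hk; move: trW; rewrite F4 raddf_sum (bigD1 ord0) //= mxtraceZ trE0.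
  rewrite (eq_bigr (fun k => n%:R * \tr (E k))); last first.
    by move=> k Hk0; rewrite mxtraceZ Hk.
  rewrite -mulr_sumr mulr1; move: trE; rewrite (bigD1 ord0) //= trE0.
  set S := \sum_(_ | _) _ => h1 h2.
  have -> : lam ord0 = n%:R * n%:R - n%:R * S by rewrite -h2 addrK.
  by rewrite -h1; ring.
split.
  move=> [_ HG] k Hk; rewrite F2 F3 in HG; have := Hlam HG k.
  by rewrite F5 => /eqP; rewrite -{2}[n%:R]add0r (inj_eq (addIr _)) => /eqP.
move=> He; split; first exact: F1n.
have Hall : forall k, lam k = n%:R.
  have Hk : forall k, k != ord0 -> lam k = n%:R by move=> k Hk; rewrite F5 He // add0r.
  by move=> k; case: (eqVneq k ord0) => [->|]; [apply: Hlam0|apply: Hk].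
rewrite F2 F3 F4 (eq_bigr (fun k => n%:R *: E k)); last by move=> k _; rewrite Hall.
by rewrite -scaler_sumr HEsum scalemx1.
Qed.

Lemma real_or_unit (C : numClosedFieldType) (r : C) :
  r != 0 -> (r + r^-1) \is Num.real -> r \is Num.real \/ `|r| = 1.
Proof.
move=> r0 /CrealP; rewrite rmorphD fmorphV => h.
set s := r^* in h *.
have s0 : s != 0 by rewrite conjC_eq0.
have e : r - s = s^-1 - r^-1.
  have -> : s^-1 - r^-1 = (s + s^-1) - s - r^-1 by ring.
  rewrite h; ring.
have : (r - s) * (1 - (r * s)^-1) = 0.
  have -> : (r - s) * (1 - (r * s)^-1) = (r - s) - (s^-1 - r^-1).
    by field; rewrite r0 s0.
  by rewrite -e subrr.
move/eqP; rewrite mulf_eq0 => /orP[|].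
  by rewrite subr_eq0 => /eqP rs; left; apply/CrealP; rewrite -/s -rs.
rewrite subr_eq0 eq_sym invr_eq1 -normCK => h1; right.
by apply/eqP; rewrite -sqrp_eq1 // normr_ge0.
Qed.

Lemma real_not_small (C : numClosedFieldType) (r : C) :
  r != 0 -> r \is Num.real -> ~~ (-2 < r + r^-1 < 2).
Proof.
move=> r0 rR; apply/negP => /andP[h1 h2].
have rV : r^-1 \is Num.real by rewrite rpredV.
have aR : r + r^-1 \is Num.real by rewrite rpredD.
have ha : `|r + r^-1| < 2 by rewrite real_ltr_norml // h1 h2.
have h4 : `|r + r^-1| * `|r + r^-1| < 2 * 2 by apply: ltr_pM.
rewrite -expr2 real_normK // in h4.
have q0 : 0 <= (r - r^-1) ^+ 2 by rewrite -realEsqr rpredB.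
have eq : (r + r^-1) ^+ 2 = (r - r^-1) ^+ 2 + 2 * 2.
  by field.
rewrite eq -[X in _ < X]add0r ltrD2r in h4.
by move: (le_lt_trans q0 h4); rewrite ltxx.
Qed.

Lemma norm_div1 (C : numClosedFieldType) (x y : C) :
  y != 0 -> `|x / y| = 1 -> `|x| = `|y|.
Proof. by move=> y0 h; rewrite -(divfK y0 x) normrM h mul1r. Qed.

Lemma all_norm_eq (C : numClosedFieldType) d (w : 'I_d.+1 -> C)
  (a : 'I_d.+1 -> 'I_d.+1 -> C) :
  (forall j, w j != 0) ->
  (forall i j, i != j -> w j / w i + w i / w j = a i j) ->
  (forall i j : 'I_d.+1, (i < j)%N -> a i j \is Num.real) ->
  (exists i0 i1 : 'I_d.+1, (i0 < i1)%N /\ -2 < a i0 i1 < 2) ->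
  exists i0, forall k, `|w k| = `|w i0|.
Proof.
move=> Hw Ha HR [i0 [i1 [lt01 hsm]]].
have aR : forall i j, i != j -> a i j \is Num.real.
  move=> i j; rewrite -val_eqE /=; case: ltngtP => // h _; first exact: HR.
  rewrite -Ha; last by rewrite -val_eqE /= gtn_eqF.
  by rewrite addrC Ha ?HR // -val_eqE /= ltn_eqF.
have key : forall i j, i != j -> (w j / w i) + (w j / w i)^-1 = a i j.
  by move=> i j hij; rewrite invf_div Ha.
have n01 : i0 != i1 by rewrite -val_eqE /= ltn_eqF.
have r0 : w i1 / w i0 != 0 by rewrite mulf_neq0 ?invr_eq0.
have rnR : w i1 / w i0 \isn't Num.real.
  apply/negP => rR; move: (@real_not_small _ _ r0 rR); rewrite key // hsm //.
have m1 : `|w i1| = `|w i0|.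
  case: (@real_or_unit _ _ r0 _); first by rewrite key // aR.
    by move=> rR; move: rnR; rewrite rR.
  by apply: norm_div1.
exists i0 => k.
case: (eqVneq k i0) => [->//|nk0]; case: (eqVneq k i1) => [->//|nk1].
have s0 : w k / w i0 != 0 by rewrite mulf_neq0 ?invr_eq0.
have t0 : w k / w i1 != 0 by rewrite mulf_neq0 ?invr_eq0.
case: (@real_or_unit _ _ s0 _); first by rewrite key 1?eq_sym // aR // eq_sym.
  move=> sR; case: (@real_or_unit _ _ t0 _); first by rewrite key 1?eq_sym // aR // eq_sym.
    move=> tR; exfalso; move: rnR; apply/negP; rewrite negbK.
    have -> : w i1 / w i0 = (w k / w i0) / (w k / w i1).
      by field; rewrite !Hw.
    by rewrite rpredM // rpredV.
  by move=> h; rewrite (@norm_div1 _ _ _ (Hw i1) h) m1.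
by apply: norm_div1.
Qed.

Theorem lemma3p2 (C : numClosedFieldType) (n d : nat)
  (A E : 'I_d.+1 -> 'M[C]_n) (P : 'M[C]_d.+1)
  (w : 'I_d.+1 -> C) (a : 'I_d.+1 -> 'I_d.+1 -> C) :
  sym_assoc_scheme A ->
  prim_idempotents_eigenmatrix A E P ->
  (forall j, w j != 0) ->
  (forall i j, i != j -> w j / w i + w i / w j = a i j) ->
  let W := \sum_(j < d.+1) w j *: A j in
  (type_II W <-> (forall k : 'I_d.+1, k != ord0 -> e_val n P a k = 0)) /\
  ((type_II W \/ (forall k : 'I_d.+1, k != ord0 -> e_val n P a k = 0)) ->
   (forall i j : 'I_d.+1, (i < j)%N -> a i j \is Num.real) ->
   (exists i0 i1 : 'I_d.+1, (i0 < i1)%N /\ -2 < a i0 i1 < 2) ->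
   exists (c : C) (H : 'M[C]_n), complex_hadamard H /\ W = c *: H).
Proof.
move=> HS HP Hw Ha W.
have P1 := @part1 _ _ _ _ _ _ _ _ HS HP Hw Ha.
split => // Hor HR Hsm.
have [_ HG] : type_II W by case: Hor => // h; apply/P1.
have [i0 Hm] := @all_norm_eq _ _ _ _ Hw Ha HR Hsm.
case: HS => [_ HAT H01 Hsum _].
set m := `|w i0| in Hm.
have m0 : m != 0 by rewrite normr_eq0.
exists m, (m^-1 *: W); split; last by rewrite scalerA divff // scale1r.
have Hc : map_mx (fun z => z^*) (m^-1 *: W) = m *: map_mx (fun z => z^-1) W.
  apply/matrixP => x y; rewrite !mxE.
  have [j Hj] := @entry_sel _ _ _ _ H01 Hsum x y; rewrite /W Hj.
  rewrite rmorphM fmorphV /= geC0_conj ?normr_ge0 //.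
  have -> : (w j)^* = m ^+ 2 / w j.
    by rewrite -(Hm j) normCK [w j * _]mulrC mulfK.
  by field; rewrite m0 Hw.
split.
  move=> x y; have [j Hj] := @entry_sel _ _ _ _ H01 Hsum x y.
  by rewrite mxE /W Hj normrM normfV Hm normr_id mulVf.
by rewrite Hc linearZ /= -scalemxAl -scalemxAr scalerA mulVf // scale1r.
Qed.
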